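(* If $B$ is a set of colors with $|B|=3$, then $\beta_B=4$.
   Context: Let $K_{2,t}$ be the complete bipartite graph with parts $U=\{u_1,u_2\}$ and $W=\{w_1,\dots,w_t\}$. For an edge coloring $c$ of $K_{2,t}$ (adjacent edges may share colors), the color code of $w\in W$ is the ordered pair $(c(u_1w),c(u_2w))$. A tree is rainbow if no two of its edges share a color; for a vertex set $S$, an $S$-tree is a subtree containing $S$; a $3$-rainbow coloring of a graph is an edge coloring such that every set $S$ of three vertices has a rainbow $S$-tree. The color codes of a subset $Y\subseteq W$ are acceptable if the coloring restricted to the subgraph induced by $Y\cup U$ is a $3$-rainbow coloring of that subgraph. For a set of colors $B$, color codes are $B$-limited if both entries of every color code lie in $B$. $\beta_B$ denotes the maximum number of vertices $|Y|$ (equivalently, the maximum $t$) for which there is an edge coloring whose color codes on $Y$ are both $B$-limited and acceptable. *)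

(* Defs.v *)
From mathcomp Require Import all_boot.
Set Implicit Arguments. Unset Strict Implicit. Unset Printing Implicit Defensive.

(* The complete bipartite graph K_{2,t}: vertices are [inl i] (i : bool,
   u_1 = inl false, u_2 = inl true) and [inr w] (w : 'I_t).  The edge
   u_i w is represented by the pair (i, w) : bool * 'I_t.  *)
Definition K2vert (t : nat) : finType := (bool + 'I_t)%type.
Definition K2edge (t : nat) : finType := (bool * 'I_t)%type.

Definition sub_adj t (E : {set K2edge t}) : rel (K2vert t) :=
  fun x y => match x, y with
  | inl i, inr w => (i, w) \in E
  | inr w, inl i => (i, w) \in E
  | _, _ => false
  end.

Definition sub_verts t (E : {set K2edge t}) : {set K2vert t} :=
  [set x | [exists y, sub_adj E x y]].

Definition is_tree t (E : {set K2edge t}) : Prop :=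
  (forall x y, x \in sub_verts E -> y \in sub_verts E -> connect (sub_adj E) x y)
  /\ #|E| = (#|sub_verts E| - 1)%N.

Definition rainbow (C : eqType) t (c : bool -> 'I_t -> C) (E : {set K2edge t}) :=
  {in E &, injective (fun e : K2edge t => c e.1 e.2)}.

Definition three_rainbow (C : eqType) t (c : bool -> 'I_t -> C) : Prop :=
  forall S : {set K2vert t}, #|S| = 3 ->
    exists E : {set K2edge t},
      [/\ is_tree E, S \subset sub_verts E & rainbow c E].

Definition B_good (C : finType) (B : {set C}) (t : nat) : Prop :=
  exists c : bool -> 'I_t -> C,
    (forall i w, c i w \in B) /\ three_rainbow c.

(* Main.v *)
Require Import Defs.
From mathcomp Require Import all_boot zify.
Set Implicit Arguments. Unset Strict Implicit. Unset Printing Implicit Defensive.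

Lemma in_sub_verts t (E : {set K2edge t}) x :
  (x \in sub_verts E) = match x with
    | inl i => [exists w, (i, w) \in E]
    | inr w => [exists i, (i, w) \in E] end.
Proof.
rewrite inE; case: x => [i|w]; apply/existsP/existsP.
- by case=> [[j|w]] //= H; exists w.
- by case=> w H; exists (inr w).
- by case=> [[j|v]] //= H; exists j.
- by case=> j H; exists (inl j).
Qed.

Lemma eq_inl (T1 T2 : eqType) (a b : T1) : (inl a == inl b :> T1 + T2) = (a == b).
Proof. by []. Qed.
Lemma eq_inr (T1 T2 : eqType) (a b : T2) : (inr a == inr b :> T1 + T2) = (a == b).
Proof. by []. Qed.
Lemma eq_inlr (T1 T2 : eqType) (a : T1) (b : T2) : (inl a == inr b :> T1 + T2) = false.
Proof. by []. Qed.
Lemma eq_inrl (T1 T2 : eqType) (a : T2) (b : T1) : (inr a == inl b :> T1 + T2) = false.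
Proof. by []. Qed.
Definition sumE := (eq_inl, eq_inr, eq_inlr, eq_inrl).

Lemma sub_adj_sym t (E : {set K2edge t}) : symmetric (sub_adj E).
Proof. by case=> [i|w] [j|v]. Qed.

Lemma card_list (T : finType) (s : seq T) : uniq s -> #|[set x in s]| = size s.
Proof. by move=> u; rewrite cardsE; apply/card_uniqP. Qed.

Lemma star_tree t (i : bool) (a b d : 'I_t) :
  a != b -> a != d -> b != d -> is_tree [set (i, a); (i, b); (i, d)].
Proof.
move=> ab ad bd.
have EE : [set (i, a); (i, b); (i, d)] = [set x in [:: (i, a); (i, b); (i, d)]].
  by apply/setP=> x; rewrite !inE orbA.
have SV : sub_verts [set (i, a); (i, b); (i, d)] =
          [set x in [:: inl i; inr a; inr b; inr d]].
  apply/setP=> x; rewrite in_sub_verts EE !inE; case: x => [j|w]; rewrite !sumE ?orbF /=.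
  - apply/existsP/idP.
    + by case=> w; rewrite !inE !xpair_eqE => /or3P [] /andP [/eqP -> _].
    + by move=> /eqP ->; exists a; rewrite !inE eqxx.
  - apply/existsP/idP.
    + by case=> j; rewrite !inE !xpair_eqE => /or3P [] /andP [_ /eqP ->];
      rewrite ?eqxx ?orbT.
    + by move=> /or3P [] /eqP ->; exists i; rewrite !inE eqxx ?orbT.
split.
- have hub : forall x, x \in sub_verts [set (i, a); (i, b); (i, d)] ->
      connect (sub_adj [set (i, a); (i, b); (i, d)]) (inl i) x.
    move=> x; rewrite SV !inE => /or4P [] /eqP ->; first exact: connect0;
    by apply: connect1; rewrite /= !inE eqxx ?orbT.
  move=> x y /hub Hx /hub Hy; apply: connect_trans Hy.
  by rewrite (sym_connect_sym (@sub_adj_sym _ _)).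
- rewrite SV EE !card_list //= !inE ?negb_or /= ?xpair_eqE ?eqxx /=.
  + by rewrite !sumE ab ad bd.
  + by rewrite ab ad bd.
Qed.

Lemma path_tree t (j : bool) (a b : 'I_t) :
  a != b -> is_tree [set (j, a); (~~ j, a); (~~ j, b)].
Proof.
move=> ab.
have EE : [set (j, a); (~~ j, a); (~~ j, b)] = [set x in [:: (j, a); (~~ j, a); (~~ j, b)]].
  by apply/setP=> x; rewrite !inE orbA.
have SV : sub_verts [set (j, a); (~~ j, a); (~~ j, b)] =
          [set x in [:: inl j; inl (~~ j); inr a; inr b]].
  apply/setP=> x; rewrite in_sub_verts EE !inE; case: x => [k|w]; rewrite !sumE ?orbF /=.
  - apply/existsP/idP.
    + by case=> w; rewrite !inE !xpair_eqE => /or3P [] /andP [/eqP -> _]; rewrite eqxx ?orbT.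
    + by move=> /orP [] /eqP ->; exists a; rewrite !inE eqxx ?orbT.
  - apply/existsP/idP.
    + by case=> k; rewrite !inE !xpair_eqE => /or3P [] /andP [_ /eqP ->];
      rewrite ?eqxx ?orbT.
    + by move=> /orP [] /eqP ->; [exists j | exists (~~ j)]; rewrite !inE eqxx ?orbT.
have jj : (~~ j == j) = false by case: (j).
have jj' : (j == ~~ j) = false by case: (j).
split.
- have hub : forall x, x \in sub_verts [set (j, a); (~~ j, a); (~~ j, b)] ->
      connect (sub_adj [set (j, a); (~~ j, a); (~~ j, b)]) (inr a) x.
    move=> x; rewrite SV !inE => /or4P [] /eqP ->; first 3 [idtac]; try exact: connect0.
    + by apply: connect1; rewrite /= !inE eqxx ?orbT.
    + by apply: connect1; rewrite /= !inE eqxx ?orbT.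
    + apply: (@connect_trans _ _ (inl (~~ j))).
        by apply: connect1; rewrite /= !inE eqxx ?orbT.
      by apply: connect1; rewrite /= !inE eqxx ?orbT.
  move=> x y /hub Hx /hub Hy; apply: connect_trans Hy.
  by rewrite (sym_connect_sym (@sub_adj_sym _ _)).
- rewrite SV EE !card_list //= !inE ?negb_or /= ?xpair_eqE ?eqxx /=.
  + by rewrite !sumE jj' ab.
  + by rewrite jj' ab.
Qed.

Lemma rainbow3 (C : eqType) t (c : bool -> 'I_t -> C) (e1 e2 e3 : K2edge t) :
  c e1.1 e1.2 != c e2.1 e2.2 -> c e1.1 e1.2 != c e3.1 e3.2 ->
  c e2.1 e2.2 != c e3.1 e3.2 -> rainbow c [set e1; e2; e3].
Proof.
move=> h12 h13 h23 x y; rewrite !inE -!orbA => /or3P [] /eqP -> /or3P [] /eqP -> //= E;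
by move: h12 h13 h23; rewrite E eqxx ?andbF.
Qed.

Lemma card_le_B (C : finType) (B : {set C}) t (c : bool -> 'I_t -> C) E :
  (forall i w, c i w \in B) -> rainbow c E -> #|E| <= #|B|.
Proof.
move=> HB Hr; rewrite -(card_in_imset Hr); apply: subset_leq_card.
by apply/subsetP=> x /imsetP [e _ ->].
Qed.

Lemma tri (C : finType) (B : {set C}) t (c : bool -> 'I_t -> C) :
  #|B| = 3 -> (forall i w, c i w \in B) -> three_rainbow c ->
  forall a b d : 'I_t, a != b -> a != d -> b != d ->
  exists i, [&& c i a != c i b, c i a != c i d & c i b != c i d].
Proof.
move=> B3 HB H a b d ab ad bd.
pose S : {set K2vert t} := [set x in [:: inr a; inr b; inr d]].
have cS : #|S| = 3.
  by rewrite card_list //= !inE !sumE (negPf ab) (negPf ad) bd.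
case: (H S cS) => E [[_ Hcard] Hsub Hr].
have E3 : #|E| <= 3 by rewrite -B3; exact: card_le_B Hr.
have inS : forall x, x \in [:: inr a; inr b; inr d] -> x \in sub_verts E.
  by move=> x hx; apply: (subsetP Hsub); rewrite inE.
have notboth : inl false \in sub_verts E -> inl true \in sub_verts E -> False.
  move=> h0 h1.
  have : 5 <= #|sub_verts E|.
    have <- : size [:: inl false; inl true; inr a; inr b; inr d] = 5 by [].
    rewrite -(@card_list (K2vert t)); last by rewrite /= !inE !sumE (negPf ab) (negPf ad) (negPf bd).
    apply: subset_leq_card; apply/subsetP=> x; rewrite inE in_cons.
    case/orP=> [/eqP -> //|]; rewrite in_cons; case/orP=> [/eqP -> //|].
    exact: inS.
  move: Hcard E3; clear; lia.
have edge : forall x, inr x \in sub_verts E -> exists i, (i, x) \in E.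
  by move=> x; rewrite in_sub_verts => /existsP.
have lft : forall i x, (i, x) \in E -> inl i \in sub_verts E.
  by move=> i x hx; rewrite in_sub_verts; apply/existsP; exists x.
have same : forall i j, inl i \in sub_verts E -> inl j \in sub_verts E -> i = j.
  by case=> [] [] // h1 h2; [case: (notboth h2 h1)|case: (notboth h1 h2)].
have [ia Ha] := edge a (inS _ (mem_head _ _)).
have mb : inr b \in ([:: inr a; inr b; inr d] : seq (K2vert t)) by rewrite !inE eqxx orbT.
have md : inr d \in ([:: inr a; inr b; inr d] : seq (K2vert t)) by rewrite !inE eqxx !orbT.
have [ib Hb] := edge b (inS _ mb).
have [id0 Hd] := edge d (inS _ md).
have eb := same _ _ (lft _ _ Hb) (lft _ _ Ha).
have ed := same _ _ (lft _ _ Hd) (lft _ _ Ha).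
rewrite eb in Hb; rewrite ed in Hd.
exists ia; apply/and3P; split; apply/negP=> /eqP e.
- by have := Hr _ _ Ha Hb e; case=> ex; move: ab; rewrite ex eqxx.
- by have := Hr _ _ Ha Hd e; case=> ex; move: ad; rewrite ex eqxx.
- by have := Hr _ _ Hb Hd e; case=> ex; move: bd; rewrite ex eqxx.
Qed.

Lemma no4 (C : finType) (B : {set C}) (p q r s : C) :
  #|B| = 3 -> p \in B -> q \in B -> r \in B -> s \in B -> uniq [:: p; q; r; s] -> False.
Proof.
move=> B3 hp hq hr hs u.
have : #|[set x in [:: p; q; r; s]]| <= #|B|.
  apply: subset_leq_card; apply/subsetP=> x; rewrite inE !in_cons in_nil orbF.
  by case/or4P=> /eqP ->.
by rewrite card_list // B3.
Qed.

Lemma in3 (C : finType) (B : {set C}) (p q r x : C) :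
  #|B| = 3 -> p \in B -> q \in B -> r \in B -> x \in B ->
  p != q -> p != r -> q != r -> [|| x == p, x == q | x == r].
Proof.
move=> B3 hp hq hr hx pq pr qr; apply/negPn/negP=> h.
apply: (no4 B3 hx hp hq hr).
by rewrite /= !inE h (negPf pq) (negPf pr) (negPf qr).
Qed.

Definition D3 (T : Type) (C : eqType) (f : T -> C) x y z :=
  [&& f x != f y, f x != f z & f y != f z].

Lemma key (C : finType) (B : {set C}) (T : eqType) (f g : T -> C) :
  #|B| = 3 -> (forall x, f x \in B) -> (forall x, g x \in B) ->
  (forall x y z, x != y -> x != z -> y != z -> D3 f x y z || D3 g x y z) ->
  forall x y z1 z2 z3, x != y -> x != z1 -> x != z2 -> x != z3 ->
  y != z1 -> y != z2 -> y != z3 -> z1 != z2 -> z1 != z3 -> z2 != z3 ->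
  f x = f y -> False.
Proof.
move=> B3 Bf Bg H x y z1 z2 z3 xy xz1 xz2 xz3 yz1 yz2 yz3 z12 z13 z23 e.
have Hg : forall z, x != z -> y != z -> D3 g x y z.
  by move=> z h1 h2; have := H x y z xy h1 h2; rewrite {1}/D3 e eqxx.
have /and3P [gxy gx1 gy1] := Hg z1 xz1 yz1.
have /and3P [_ gx2 gy2] := Hg z2 xz2 yz2.
have /and3P [_ gx3 gy3] := Hg z3 xz3 yz3.
have e2 : g z2 = g z1.
  have := in3 B3 (Bg x) (Bg y) (Bg z1) (Bg z2) gxy gx1 gy1.
  by rewrite eq_sym (negPf gx2) eq_sym (negPf gy2) /= => /eqP.
have e3 : g z3 = g z1.
  have := in3 B3 (Bg x) (Bg y) (Bg z1) (Bg z3) gxy gx1 gy1.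
  by rewrite eq_sym (negPf gx3) eq_sym (negPf gy3) /= => /eqP.
have : D3 f z1 z2 z3 by have := H z1 z2 z3 z12 z13 z23; rewrite {2}/D3 e2 eqxx orbF.
case/and3P=> f12 f13 f23.
case/or3P: (in3 B3 (Bf z1) (Bf z2) (Bf z3) (Bf x) f12 f13 f23) => /eqP ex.
- by have := H x z1 z2 xz1 xz2 z12; rewrite /D3 ex e2 !eqxx /= !andbF.
- by have := H x z2 z3 xz2 xz3 z23; rewrite /D3 ex e2 e3 !eqxx /= !andbF.
- by have := H x z1 z3 xz1 xz3 z13; rewrite /D3 ex e3 !eqxx /= !andbF.
Qed.

Lemma upper (C : finType) (B : {set C}) t : #|B| = 3 -> B_good B t -> t <= 4.
Proof.
move=> B3 [c [Bc Hc]].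
case: t c Bc Hc => [|[|[|[|[|t]]]]] c Bc Hc //; exfalso.
pose o (k : nat) : 'I_(t.+4.+1) := inord k.
have ne : forall i j, i < 5 -> j < 5 -> i != j -> o i != o j.
  move=> i j hi hj hij; apply/negP=> /eqP /(congr1 val).
  rewrite /o /= !inordK; [|lia|lia]; by move/eqP; rewrite (negPf hij).
have H : forall x y z, x != y -> x != z -> y != z ->
    D3 (c false) x y z || D3 (c true) x y z.
  move=> x y z h1 h2 h3; have [[] Hi] := tri B3 Bc Hc h1 h2 h3;
  by rewrite /D3 Hi ?orbT.
have K := key B3 (Bc false) (Bc true) H.
apply: (no4 B3 (Bc false (o 0)) (Bc false (o 1)) (Bc false (o 2)) (Bc false (o 3))).
rewrite /= !inE !negb_or; repeat (apply/andP; split) => //; apply/negP=> /eqP e.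
- by apply: (K (o 0) (o 1) (o 2) (o 3) (o 4) _ _ _ _ _ _ _ _ _ _ e); apply: ne.
- by apply: (K (o 0) (o 2) (o 1) (o 3) (o 4) _ _ _ _ _ _ _ _ _ _ e); apply: ne.
- by apply: (K (o 0) (o 3) (o 1) (o 2) (o 4) _ _ _ _ _ _ _ _ _ _ e); apply: ne.
- by apply: (K (o 1) (o 2) (o 0) (o 3) (o 4) _ _ _ _ _ _ _ _ _ _ e); apply: ne.
- by apply: (K (o 1) (o 3) (o 0) (o 2) (o 4) _ _ _ _ _ _ _ _ _ _ e); apply: ne.
- by apply: (K (o 2) (o 3) (o 0) (o 1) (o 4) _ _ _ _ _ _ _ _ _ _ e); apply: ne.
Qed.

Definition w0 : 'I_4 := @Ordinal 4 0 isT.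
Definition w1 : 'I_4 := @Ordinal 4 1 isT.
Definition w2 : 'I_4 := @Ordinal 4 2 isT.
Definition w3 : 'I_4 := @Ordinal 4 3 isT.

Lemma svl t i w (E : {set K2edge t}) : (i, w) \in E -> inl i \in sub_verts E.
Proof. by move=> h; rewrite in_sub_verts; apply/existsP; exists w. Qed.
Lemma svr t i w (E : {set K2edge t}) : (i, w) \in E -> inr w \in sub_verts E.
Proof. by move=> h; rewrite in_sub_verts; apply/existsP; exists i. Qed.

Lemma cover (x : K2vert 4) : x = inl false \/ x = inl true \/ x = inr w0 \/ x = inr w1 \/ x = inr w2 \/ x = inr w3.
Proof.
case: x => [[]|w]; [by right; left|by left|].
do 2 right; case: w => [[|[|[|[|n]]]] Hn]; [left|right;left|do 2 right; left|do 3 right|];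
  try (by congr inr; apply/val_inj).
by [].
Qed.

Definition k0 : 'I_3 := @Ordinal 3 0 isT.
Definition k1 : 'I_3 := @Ordinal 3 1 isT.
Definition k2 : 'I_3 := @Ordinal 3 2 isT.
Definition c0 (i : bool) (w : 'I_4) : 'I_3 :=
  if i then nth k0 [:: k1; k2; k0; k0] w else nth k0 [:: k0; k0; k1; k2] w.

Ltac solve_sv :=
  first [ apply: (@svr _ true); by rewrite !inE eqxx ?orbT
        | apply: (@svr _ false); by rewrite !inE eqxx ?orbT
        | apply: (@svl _ _ w0); by rewrite !inE eqxx ?orbT
        | apply: (@svl _ _ w1); by rewrite !inE eqxx ?orbT
        | apply: (@svl _ _ w2); by rewrite !inE eqxx ?orbT
        | apply: (@svl _ _ w3); by rewrite !inE eqxx ?orbT ].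

Lemma sub6 (S V : {set K2vert 4}) :
  (inl false \in S -> inl false \in V) -> (inl true \in S -> inl true \in V) ->
  (inr w0 \in S -> inr w0 \in V) -> (inr w1 \in S -> inr w1 \in V) ->
  (inr w2 \in S -> inr w2 \in V) -> (inr w3 \in S -> inr w3 \in V) -> S \subset V.
Proof.
move=> ? ? ? ? ? ?; apply/subsetP => x; by case: (cover x) => [->|[->|[->|[->|[->|->]]]]].
Qed.

Ltac sub_tac :=
  apply: sub6; intro;
  solve [ match goal with H : ?e = false, H' : is_true ?e |- _ =>
            rewrite H in H'; discriminate H' end
        | solve_sv ].

Lemma lower (C : finType) (B : {set C}) : #|B| = 3 -> B_good B 4.
Proof.
move=> B3.
pose h (k : 'I_3) : C := enum_val (cast_ord (esym B3) k).
have hinj : injective h by move=> x y /enum_val_inj /cast_ord_inj.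
exists (fun i w => h (c0 i w)); split; first by move=> i w; apply: enum_valP.
move=> S cS.
have rb : forall e1 e2 e3 : K2edge 4, c0 e1.1 e1.2 != c0 e2.1 e2.2 ->
    c0 e1.1 e1.2 != c0 e3.1 e3.2 -> c0 e2.1 e2.2 != c0 e3.1 e3.2 ->
    rainbow (fun i w => h (c0 i w)) [set e1; e2; e3].
  by move=> e1 e2 e3 ? ? ?; apply: rainbow3; rewrite (inj_eq hinj).
have use : forall E, is_tree E -> rainbow (fun i w => h (c0 i w)) E ->
    S \subset sub_verts E -> exists E, [/\ is_tree E, S \subset sub_verts E
       & rainbow (fun i w => h (c0 i w)) E].
  by move=> E h1 h2 h3; exists E.
pose L : seq (K2vert 4) := [:: inl false; inl true; inr w0; inr w1; inr w2; inr w3].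
have SL : S = [set x in [seq x <- L | x \in S]].
  apply/setP=> x; rewrite inE mem_filter; case: (x \in S) => //=.
  by case: (cover x) => [->|[->|[->|[->|[->|->]]]]]; rewrite !inE eqxx ?orbT.
have cL : size [seq x <- L | x \in S] = 3.
  by rewrite -card_list ?filter_uniq // -SL.
move: cL; rewrite /=.
case h1 : (inl false \in S); case h2 : (inl true \in S);
case h3 : (inr w0 \in S); case h4 : (inr w1 \in S);
case h5 : (inr w2 \in S); case h6 : (inr w3 \in S); move=> /= E3;
try discriminate E3.
all: first
  [ (apply: (use _ (@star_tree 4 false w0 w2 w3 isT isT isT)); [by apply: rb | sub_tac])
  | (apply: (use _ (@path_tree 4 false w0 w1 isT)); [by apply: rb | sub_tac])
  | (apply: (use _ (@star_tree 4 false w1 w2 w3 isT isT isT)); [by apply: rb | sub_tac])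
  | (apply: (use _ (@path_tree 4 true w2 w3 isT)); [by apply: rb | sub_tac])
  | (apply: (use _ (@star_tree 4 true w0 w1 w2 isT isT isT)); [by apply: rb | sub_tac])
  | (apply: (use _ (@star_tree 4 true w0 w1 w3 isT isT isT)); [by apply: rb | sub_tac]) ].
Qed.

Theorem claim3 (C : finType) (B : {set C}) :
  #|B| = 3 -> B_good B 4 /\ (forall t : nat, B_good B t -> t <= 4).
Proof.
move=> B3; split; first exact: lower.
by move=> t; apply: upper.
Qed.
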